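(* Let $I\subset\mathbb{R}$ be an interval, let $a,b,c,d,f,g:I\to\mathbb{R}$ be given with $a(t)\neq0$ on $I$, and let $b_1,b_2$ be real constants. Suppose $\mu>0,\alpha,\beta,\gamma,\delta,\varepsilon,\kappa$ are differentiable functions on $I$ satisfying $$\alpha'+b=2c\alpha+4a\alpha^2,\quad \beta'=(c+4a\alpha)\beta,\quad \gamma'=a\beta^2,$$ $$\delta'+2\alpha g=(c+4a\alpha)\delta+f,\quad \varepsilon'=(2a\delta-g)\beta,\quad \kappa'=a\delta^2-g\delta,$$ and $\alpha=-\dfrac{\mu'}{4a\mu}-\dfrac{d}{2a}$. Let $S(x,t)=\alpha(t)x^2+\delta(t)x+\kappa(t)$ and define $$h_1=a\beta^2\mu e^{-2S},\quad L_1=-b_1a\beta^2,\quad M_i=b_ia\beta^2\mu^{-1/2}e^{S}\ (i=1,2).$$ If $u(\xi,\tau),v(\xi,\tau)$ solve the Gray–Scott-type system $$u_\tau=u_{\xi\xi}-uv^2+b_1(1-u),\qquad v_\tau=v_{\xi\xi}+uv^2-b_1v+b_2,$$ then $\psi=\mu^{-1/2}e^{S}u(\xi,\tau)$, $\varphi=\mu^{-1/2}e^{S}v(\xi,\tau)$, with $\xi=\beta(t)x+\varepsilon(t)$, $\tau=\gamma(t)$, solve $$\psi_t=a\psi_{xx}-(bx^2-d-L_1-xf)\psi-(g-cx)\psi_x-h_1\psi\varphi^2+M_1,$$ $$\varphi_t=a\varphi_{xx}-(bx^2-d-L_1-xf)\varphi-(g-cx)\varphi_x+h_1\psi\varphi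^2+M_2.$$
   Context: All functions are real-valued; primes denote derivatives with respect to $t$. *)

(* Defs.v *)
From Stdlib Require Import Reals.
From Coquelicot Require Import Coquelicot.
Open Scope R_scope.

Definition is_interval (I : R -> Prop) : Prop :=
  forall x y z, I x -> I z -> x <= y -> y <= z -> I y.

Definition pd1 (u : R -> R -> R) (x t : R) : R := Derive (fun z => u z t) x.
Definition pd2 (u : R -> R -> R) (x t : R) : R := Derive (fun s => u x s) t.
Definition pd11 (u : R -> R -> R) (x t : R) : R := Derive (fun z => pd1 u z t) x.

Definition regular_at (u : R -> R -> R) (x t : R) : Prop :=
  differentiable_pt_lim u x t (pd1 u x t) (pd2 u x t) /\
  ex_derive (fun z => pd1 u z t) x.

(* Main.v *)
Require Import Defs.
From Stdlib Require Import Reals Lra.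
From Coquelicot Require Import Coquelicot.
Open Scope R_scope.

Lemma Deq (f : R -> R) (x l l' : R) : is_derive f x l -> l = l' -> is_derive f x l'.
Proof. intros H ->; exact H. Qed.

Lemma Dmul (f g : R -> R) (x df dg : R) : is_derive f x df -> is_derive g x dg ->
  is_derive (fun y => f y * g y) x (df * g x + f x * dg).
Proof. intros H1 H2. apply (is_derive_mult f g x df dg H1 H2). intros; apply Rmult_comm. Qed.

Lemma Dadd (f g : R -> R) (x df dg : R) : is_derive f x df -> is_derive g x dg ->
  is_derive (fun y => f y + g y) x (df + dg).
Proof. intros H1 H2. apply (is_derive_plus f g x df dg H1 H2). Qed.

Lemma Dconst (k x : R) : is_derive (fun _ => k) x 0.
Proof. apply (is_derive_const k x). Qed.

Lemma Did (x : R) : is_derive (fun y => y) x 1.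
Proof. apply (is_derive_id x). Qed.

Lemma Dexp (f : R -> R) (x df : R) : is_derive f x df -> is_derive (fun y => exp (f y)) x (exp (f x) * df).
Proof. intros H. eapply Deq. apply (is_derive_comp exp f x _ _ (is_derive_exp _) H).
  simpl. unfold scal; simpl; unfold mult; simpl. ring. Qed.

Lemma Dcomp_lin (h : R -> R) (p q x dh : R) : is_derive h (p * x + q) dh ->
  is_derive (fun y => h (p * y + q)) x (dh * p).
Proof. intros H. eapply Deq. apply (is_derive_comp h (fun y => p*y+q) x _ p H).
  eapply Deq. apply Dadd. apply is_derive_scal. apply Did. apply Dconst. ring.
  unfold scal; simpl; unfold mult; simpl. ring. Qed.

Lemma D2d (w : R -> R -> R) (f2 f3 : R -> R) (x l1 l2 d2 d3 : R) :
  differentiable_pt_lim w (f2 x) (f3 x) l1 l2 -> is_derive f2 x d2 -> is_derive f3 x d3 ->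
  is_derive (fun s => w (f2 s) (f3 s)) x (l1 * d2 + l2 * d3).
Proof. intros H H2 H3. apply is_derive_Reals. apply derivable_pt_lim_comp_2d; auto;
  apply is_derive_Reals; auto. Qed.

Lemma gen (mu alpha beta gamma delta eps kappa : R -> R) (w : R -> R -> R) (t x : R)
  (Hmu : 0 < mu t)
  (Hd : ex_derive mu t /\ ex_derive alpha t /\ ex_derive beta t /\ ex_derive gamma t /\
     ex_derive delta t /\ ex_derive eps t /\ ex_derive kappa t)
  (Hw : forall y, regular_at w (beta t * y + eps t) (gamma t)) :
  let S := fun x t => alpha t * x ^ 2 + delta t * x + kappa t in
  let P := fun x t => / sqrt (mu t) * exp (S x t) * w (beta t * x + eps t) (gamma t) in
  (forall y, is_derive (fun z => P z t) y
     (/ sqrt (mu t) * exp (S y t) * ((2 * alpha t * y + delta t) * w (beta t * y + eps t) (gamma t)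
        + beta t * pd1 w (beta t * y + eps t) (gamma t)))) /\
  is_derive (fun z => pd1 P z t) x
     (/ sqrt (mu t) * exp (S x t) * ((2 * alpha t * x + delta t) *
        ((2 * alpha t * x + delta t) * w (beta t * x + eps t) (gamma t)
        + beta t * pd1 w (beta t * x + eps t) (gamma t))
      + (2 * alpha t * w (beta t * x + eps t) (gamma t)
         + (2 * alpha t * x + delta t) * beta t * pd1 w (beta t * x + eps t) (gamma t)
         + beta t * beta t * pd11 w (beta t * x + eps t) (gamma t)))) /\
  is_derive (fun s => P x s) t
     (/ sqrt (mu t) * exp (S x t) * (w (beta t * x + eps t) (gamma t) *
        (- Derive mu t / (2 * mu t) + Derive alpha t * x ^ 2 + Derive delta t * x + Derive kappa t)
      + pd1 w (beta t * x + eps t) (gamma t) * (Derive beta t * x + Derive eps t)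
      + pd2 w (beta t * x + eps t) (gamma t) * Derive gamma t)).
Proof.
  intros S P.
  destruct Hd as (Dmu & Dal & Dbe & Dga & Dde & Dep & Dka).
  assert (Hs : 0 < sqrt (mu t)) by (apply sqrt_lt_R0; auto).
  assert (HW1 : forall y, is_derive (fun z => w (beta t * z + eps t) (gamma t)) y
             (pd1 w (beta t * y + eps t) (gamma t) * beta t)).
  { intros y. destruct (Hw y) as [Hdw _].
    eapply Deq. apply (D2d w (fun z => beta t * z + eps t) (fun _ => gamma t) y).
    exact Hdw. eapply Deq. apply Dadd. apply is_derive_scal. apply Did. apply Dconst.
    reflexivity. apply Dconst. ring. }
  assert (HS : forall y, is_derive (fun z => S z t) y (2 * alpha t * y + delta t)).
  { intros y. unfold S. eapply Deq. apply Dadd. apply Dadd.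
    apply is_derive_scal. apply is_derive_pow. apply Did.
    apply is_derive_scal. apply Did. apply Dconst. simpl. ring. }
  assert (H1 : forall y, is_derive (fun z => P z t) y
     (/ sqrt (mu t) * exp (S y t) * ((2 * alpha t * y + delta t) * w (beta t * y + eps t) (gamma t)
        + beta t * pd1 w (beta t * y + eps t) (gamma t)))).
  { intros y. unfold P. eapply Deq. apply Dmul. apply is_derive_scal. apply Dexp. apply HS.
    apply HW1. cbv beta. ring. } 
  split; [exact H1|split].
  - assert (E : forall z, pd1 P z t = / sqrt (mu t) * exp (S z t) * ((2 * alpha t * z + delta t) * w (beta t * z + eps t) (gamma t)
        + beta t * pd1 w (beta t * z + eps t) (gamma t))).
    { intros z. unfold pd1. apply is_derive_unique. apply H1. }
    destruct (Hw x) as [_ Hw2].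
    assert (H11 : is_derive (fun z => pd1 w (beta t * z + eps t) (gamma t)) x
                   (pd11 w (beta t * x + eps t) (gamma t) * beta t)).
    { apply (Dcomp_lin (fun z => pd1 w z (gamma t))). unfold pd11.
      apply Derive_correct. exact Hw2. }
    
    apply (is_derive_ext (fun z => / sqrt (mu t) * exp (S z t) * ((2 * alpha t * z + delta t) * w (beta t * z + eps t) (gamma t)
        + beta t * pd1 w (beta t * z + eps t) (gamma t)))).
    { intros z. symmetry. apply E. }
    
    eapply Deq. apply Dmul. apply is_derive_scal. apply Dexp. apply HS.
    apply Dadd. apply Dmul. eapply Deq. apply Dadd. apply is_derive_scal. apply Did. apply Dconst.
    reflexivity. apply HW1. apply is_derive_scal. apply H11.  cbv beta. ring.
  - destruct (Hw x) as [Hdw _].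
    unfold P. eapply Deq. apply Dmul. apply Dmul.
    apply is_derive_inv. apply is_derive_sqrt. apply Derive_correct; auto. auto. lra.
    apply Dexp. unfold S. apply Dadd. apply Dadd.
    apply Dmul. apply Derive_correct; auto. apply Dconst.
    apply Dmul. apply Derive_correct; auto. apply Dconst.
    apply Derive_correct; auto.
    apply (D2d w (fun s => beta s * x + eps s) gamma t). exact Hdw.
    apply Dadd. apply Dmul. apply Derive_correct; auto. apply Dconst.
    apply Derive_correct; auto. apply Derive_correct; auto.
    cbv beta. replace (2 * mu t) with (2 * (sqrt (mu t) * sqrt (mu t))) by (rewrite sqrt_sqrt; lra). field. lra.
Qed.

Theorem theorem4
  (I : R -> Prop) (HI : is_interval I)
  (a b c d f g : R -> R) (b1 b2 : R)
  (mu alpha beta gamma delta eps kappa : R -> R)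
  (u v : R -> R -> R)
  (Ha : forall t, I t -> a t <> 0)
  (Hmu : forall t, I t -> 0 < mu t)
  (Hdiff : forall t, I t ->
     ex_derive mu t /\ ex_derive alpha t /\ ex_derive beta t /\ ex_derive gamma t /\
     ex_derive delta t /\ ex_derive eps t /\ ex_derive kappa t)
  (Halpha : forall t, I t ->
     Derive alpha t + b t = 2 * c t * alpha t + 4 * a t * (alpha t) ^ 2)
  (Hbeta : forall t, I t ->
     Derive beta t = (c t + 4 * a t * alpha t) * beta t)
  (Hgamma : forall t, I t -> Derive gamma t = a t * (beta t) ^ 2)
  (Hdelta : forall t, I t ->
     Derive delta t + 2 * alpha t * g t = (c t + 4 * a t * alpha t) * delta t + f t)
  (Heps : forall t, I t -> Derive eps t = (2 * a t * delta t - g t) * beta t)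
  (Hkappa : forall t, I t -> Derive kappa t = a t * (delta t) ^ 2 - g t * delta t)
  (Halpha_mu : forall t, I t ->
     alpha t = - (Derive mu t / (4 * a t * mu t)) - d t / (2 * a t))
  (* u, v solve the Gray-Scott-type system at every point (xi, tau) =
     (beta t * x + eps t, gamma t), t in I, x real *)
  (Hu : forall x t, I t ->
     regular_at u (beta t * x + eps t) (gamma t) /\
     pd2 u (beta t * x + eps t) (gamma t) =
       pd11 u (beta t * x + eps t) (gamma t)
       - u (beta t * x + eps t) (gamma t) * (v (beta t * x + eps t) (gamma t)) ^ 2
       + b1 * (1 - u (beta t * x + eps t) (gamma t)))
  (Hv : forall x t, I t ->
     regular_at v (beta t * x + eps t) (gamma t) /\
     pd2 v (beta t * x + eps t) (gamma t) =
       pd11 v (beta t * x + eps t) (gamma t)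
       + u (beta t * x + eps t) (gamma t) * (v (beta t * x + eps t) (gamma t)) ^ 2
       - b1 * v (beta t * x + eps t) (gamma t) + b2) :
  let S := fun x t => alpha t * x ^ 2 + delta t * x + kappa t in
  let h1 := fun x t => a t * (beta t) ^ 2 * mu t * exp (- (2 * S x t)) in
  let L1 := fun t => - (b1 * a t * (beta t) ^ 2) in
  let M1 := fun x t => b1 * a t * (beta t) ^ 2 * / sqrt (mu t) * exp (S x t) in
  let M2 := fun x t => b2 * a t * (beta t) ^ 2 * / sqrt (mu t) * exp (S x t) in
  let psi := fun x t => / sqrt (mu t) * exp (S x t) * u (beta t * x + eps t) (gamma t) in
  let phi := fun x t => / sqrt (mu t) * exp (S x t) * v (beta t * x + eps t) (gamma t) in
  forall x t, I t ->
    ex_derive (fun y => psi y t) x /\ ex_derive (fun y => pd1 psi y t) x /\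
    is_derive (fun s => psi x s) t
      (a t * pd11 psi x t
       - (b t * x ^ 2 - d t - L1 t - x * f t) * psi x t
       - (g t - c t * x) * pd1 psi x t
       - h1 x t * psi x t * (phi x t) ^ 2 + M1 x t) /\
    ex_derive (fun y => phi y t) x /\ ex_derive (fun y => pd1 phi y t) x /\
    is_derive (fun s => phi x s) t
      (a t * pd11 phi x t
       - (b t * x ^ 2 - d t - L1 t - x * f t) * phi x t
       - (g t - c t * x) * pd1 phi x t
       + h1 x t * psi x t * (phi x t) ^ 2 + M2 x t).
Proof.
  intros S h1 L1 M1 M2 psi phi x t Ht.
  pose proof (Hdiff t Ht) as Hd.
  assert (Hwu : forall y, regular_at u (beta t * y + eps t) (gamma t)) by (intro y; apply (Hu y t Ht)).
  assert (Hwv : forall y, regular_at v (beta t * y + eps t) (gamma t)) by (intro y; apply (Hv y t Ht)).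
  pose proof (gen mu alpha beta gamma delta eps kappa u t x (Hmu t Ht) Hd Hwu) as GU.
  pose proof (gen mu alpha beta gamma delta eps kappa v t x (Hmu t Ht) Hd Hwv) as GV.
  cbv zeta in GU, GV.
  destruct GU as (U1 & U2 & U3). destruct GV as (V1 & V2 & V3).
  assert (EU1 : pd1 psi x t = / sqrt (mu t) * exp (S x t) * ((2 * alpha t * x + delta t) * u (beta t * x + eps t) (gamma t)
        + beta t * pd1 u (beta t * x + eps t) (gamma t))).
  { unfold pd1. apply is_derive_unique. apply U1. }
  assert (EV1 : pd1 phi x t = / sqrt (mu t) * exp (S x t) * ((2 * alpha t * x + delta t) * v (beta t * x + eps t) (gamma t)
        + beta t * pd1 v (beta t * x + eps t) (gamma t))).
  { unfold pd1. apply is_derive_unique. apply V1. }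
  assert (EU2 : forall z, pd1 psi z t = / sqrt (mu t) * exp (S z t) * ((2 * alpha t * z + delta t) * u (beta t * z + eps t) (gamma t)
        + beta t * pd1 u (beta t * z + eps t) (gamma t))).
  { intro z. unfold pd1. apply is_derive_unique. apply U1. }
  assert (EV2 : forall z, pd1 phi z t = / sqrt (mu t) * exp (S z t) * ((2 * alpha t * z + delta t) * v (beta t * z + eps t) (gamma t)
        + beta t * pd1 v (beta t * z + eps t) (gamma t))).
  { intro z. unfold pd1. apply is_derive_unique. apply V1. }
  assert (EU11 : pd11 psi x t = / sqrt (mu t) * exp (S x t) * ((2 * alpha t * x + delta t) *
        ((2 * alpha t * x + delta t) * u (beta t * x + eps t) (gamma t)
        + beta t * pd1 u (beta t * x + eps t) (gamma t))
      + (2 * alpha t * u (beta t * x + eps t) (gamma t)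
         + (2 * alpha t * x + delta t) * beta t * pd1 u (beta t * x + eps t) (gamma t)
         + beta t * beta t * pd11 u (beta t * x + eps t) (gamma t)))).
  { unfold pd11. apply is_derive_unique. apply U2. }
  assert (EV11 : pd11 phi x t = / sqrt (mu t) * exp (S x t) * ((2 * alpha t * x + delta t) *
        ((2 * alpha t * x + delta t) * v (beta t * x + eps t) (gamma t)
        + beta t * pd1 v (beta t * x + eps t) (gamma t))
      + (2 * alpha t * v (beta t * x + eps t) (gamma t)
         + (2 * alpha t * x + delta t) * beta t * pd1 v (beta t * x + eps t) (gamma t)
         + beta t * beta t * pd11 v (beta t * x + eps t) (gamma t)))).
  { unfold pd11. apply is_derive_unique. apply V2. }
  assert (Dal : Derive alpha t = 2 * c t * alpha t + 4 * a t * (alpha t) ^ 2 - b t)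
    by (pose proof (Halpha t Ht); lra).
  assert (Dde : Derive delta t = (c t + 4 * a t * alpha t) * delta t + f t - 2 * alpha t * g t)
    by (pose proof (Hdelta t Ht); lra).
  assert (Hat := Ha t Ht). assert (Hmt := Hmu t Ht).
  assert (Dmu : Derive mu t = - (4 * a t * mu t * alpha t) - 2 * mu t * d t).
  { rewrite (Halpha_mu t Ht). field. lra. }
  assert (Hexp : exp (- (2 * S x t)) = / (exp (S x t) * exp (S x t))).
  { rewrite exp_Ropp. f_equal. rewrite <- exp_plus. f_equal. ring. }
  assert (HE : 0 < exp (S x t)) by apply exp_pos.
  assert (Hs : 0 < sqrt (mu t)) by (apply sqrt_lt_R0; auto).
  assert (Hs2 : sqrt (mu t) * sqrt (mu t) = mu t) by (apply sqrt_sqrt; lra).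
  destruct (Hu x t Ht) as [_ Pu]. destruct (Hv x t Ht) as [_ Pv].
  split; [exists (/ sqrt (mu t) * exp (S x t) * ((2 * alpha t * x + delta t) * u (beta t * x + eps t) (gamma t)
        + beta t * pd1 u (beta t * x + eps t) (gamma t))); apply U1|].
  split; [eexists; apply U2|].
  split.
  { eapply Deq. apply U3.
    rewrite EU1, EU11. unfold h1, M1, L1, psi, phi. rewrite Hexp, Pu, Dal, Dde, Dmu,
      (Hbeta t Ht), (Hgamma t Ht), (Heps t Ht), (Hkappa t Ht).
    unfold S in *. set (E := exp (alpha t * x ^ 2 + delta t * x + kappa t)) in *.
    set (s := sqrt (mu t)) in *. clearbody E s. rewrite <- Hs2. field. lra. }
  split; [exists (/ sqrt (mu t) * exp (S x t) * ((2 * alpha t * x + delta t) * v (beta t * x + eps t) (gamma t)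
        + beta t * pd1 v (beta t * x + eps t) (gamma t))); apply V1|].
  split; [eexists; apply V2|].
  { eapply Deq. apply V3.
    rewrite EV1, EV11. unfold h1, M2, L1, psi, phi. rewrite Hexp, Pv, Dal, Dde, Dmu,
      (Hbeta t Ht), (Hgamma t Ht), (Heps t Ht), (Hkappa t Ht).
    unfold S in *. set (E := exp (alpha t * x ^ 2 + delta t * x + kappa t)) in *.
    set (s := sqrt (mu t)) in *. clearbody E s. rewrite <- Hs2. field. lra. }
Qed.
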